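(* For every prime power $q$, there are no cutting $[7,4]_{q^3/q}$ systems.
   Context: An $[n,k]_{q^m/q}$ system is an $\mathbb F_q$-subspace $U$ of $\mathbb F_{q^m}^k$ with $\dim_{\mathbb F_q}(U)=n$ and $\langle U\rangle_{\mathbb F_{q^m}}=\mathbb F_{q^m}^k$. It is cutting if for every $\mathbb F_{q^m}$-hyperplane $H$ of $\mathbb F_{q^m}^k$ one has $\langle H\cap U\rangle_{\mathbb F_{q^m}}=H$. *)

(* Defs.v *)
From HB Require Import structures.
From mathcomp Require Import all_boot all_order all_algebra all_field.
Set Implicit Arguments. Unset Strict Implicit. Unset Printing Implicit Defensive.
Import GRing.Theory.
Local Open Scope ring_scope.

(* Vectors of L^k are modelled as finite functions 'I_k -> L; this type is
   canonically a vectType over F (the base field of L), so F-subspaces are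
   {vspace {ffun 'I_k -> L}} and \dim is the F-dimension. *)

Definition Lspan (F : fieldType) (L : fieldExtType F) (k : nat)
    (P : pred {ffun 'I_k -> L}) (v : {ffun 'I_k -> L}) : Prop :=
  exists (s : seq {ffun 'I_k -> L}) (c : seq L),
    all P s /\ size c = size s /\
    v = [ffun i => \sum_(j < size s) c`_j * (s`_j) i].

Definition Lhyperplane (F : fieldType) (L : fieldExtType F) (k : nat)
    (a : {ffun 'I_k -> L}) : pred {ffun 'I_k -> L} :=
  [pred v : {ffun 'I_k -> L} | \sum_(i < k) a i * v i == 0].

Definition is_system (F : fieldType) (L : fieldExtType F) (n k : nat)
    (U : {vspace {ffun 'I_k -> L}}) : Prop :=
  \dim U = n /\ forall v : {ffun 'I_k -> L}, Lspan (mem U) v.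

(* cutting: every L-hyperplane H satisfies <H cap U>_L = H
   (the inclusion <H cap U>_L <= H is automatic). *)
Definition is_cutting (F : fieldType) (L : fieldExtType F) (k : nat)
    (U : {vspace {ffun 'I_k -> L}}) : Prop :=
  forall a : {ffun 'I_k -> L}, a != 0 ->
    forall v, v \in Lhyperplane a ->
      Lspan (predI (Lhyperplane a) (mem U)) v.

(* Main.v *)
Require Import Defs.
From HB Require Import structures.
From Stdlib Require Import Lia.
From mathcomp Require Import all_boot all_order all_algebra all_field.
From mathcomp Require Import ring zify.
Set Implicit Arguments. Unset Strict Implicit. Unset Printing Implicit Defensive.
Import GRing.Theory.

Module Aux.
Local Open Scope ring_scope.
Section S.
Variables (F : fieldType) (L : fieldExtType F).
Notation V := {ffun 'I_4 -> L}.

Definition scf (c : L) (v : V) : V := [ffun i => c * v i].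
Definition lzf (u : V) (c : L) : V := [ffun i => c * u i].
Definition dotv (a v : V) : L := \sum_i a i * v i.

Lemma scf_lin c : linear (scf c).
Proof. by move=> a u v; apply/ffunP=> i; rewrite !ffunE mulrDr scalerAr. Qed.
HB.instance Definition _ c := GRing.isLinear.Build F V V _ (scf c) (scf_lin c).
Lemma lzf_lin u : linear (lzf u).
Proof. by move=> a c d; apply/ffunP=> i; rewrite !ffunE mulrDl scalerAl. Qed.
HB.instance Definition _ u := GRing.isLinear.Build F L V _ (lzf u) (lzf_lin u).
Lemma dotv_lin a : linear (dotv a).
Proof.
move=> b v w; rewrite /dotv scaler_sumr -big_split /=; apply: eq_bigr => i _.
by rewrite !ffunE mulrDr scalerAr.
Qed.
HB.instance Definition _ a := GRing.isLinear.Build F V L _ (dotv a) (dotv_lin a).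

Definition Ssc c : 'Hom(V, V) := linfun (scf c).
Definition Lz u : 'Hom(L, V) := linfun (lzf u).
Definition Dt a : 'Hom(V, L) := linfun (dotv a).

Lemma SscE c v : Ssc c v = scf c v. Proof. by rewrite lfunE. Qed.
Lemma LzE u c : Lz u c = lzf u c. Proof. by rewrite lfunE. Qed.
Lemma DtE a v : Dt a v = dotv a v. Proof. by rewrite lfunE. Qed.

Lemma dimV : \dim (fullv : {vspace V}) = (4 * \dim (fullv : {vspace L}))%N.
Proof. by rewrite !dimvf /dim /= card_ord. Qed.

Lemma dual2 (M : 'M[L]_(2,4)) : exists (G : 'M[L]_(4,2)) (E : 'M[L]_(2,4)),
  M *m G = 0 /\ E *m G = 1%:M.
Proof.
pose Y : 'M[L]_(4,2) := \matrix_(k, j) ((k : nat) == (j : nat) + 2)%N%:R.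
pose R := row_ebase M.
exists (invmx R *m Y), (Y^T *m R); split.
  rewrite -{1}(mulmx_ebase M) -!mulmxA (mulmxA R) mulmxV ?row_ebase_unit // mul1mx.
  suff -> : (pid_mx (\rank M) : 'M[L]_(2,4)) *m Y = 0 by rewrite mulmx0.
  apply/matrixP=> i j; rewrite !mxE; apply: big1 => k _; rewrite !mxE.
  case: (i =P k :> nat) => [ik|_]; last by rewrite mul0r.
  rewrite (_ : ((k : nat) == j + 2)%N = false) ?mulr0 //.
  by apply/negbTE; rewrite -ik neq_ltn (leq_trans (ltn_ord i)) ?leq_addl.
rewrite mulmxA -(mulmxA Y^T) mulmxV ?row_ebase_unit // mulmx1.
apply/matrixP=> i j; rewrite !mxE (bigD1 (rshift 2 i)) //= big1 ?addr0.
  rewrite !mxE /= addnC eqxx eqn_add2r mul1r.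
  by [].
move=> k nk; rewrite !mxE; case: ((k : nat) =P i + 2)%N => [e|]; last by rewrite mul0r.
by case/negP: nk; apply/eqP/val_inj; rewrite /= e addnC.
Qed.
Lemma ffun_nz (u : V) : u != 0 -> exists i, u i != 0.
Proof.
move=> un; case: (pickP (fun i => u i != 0)) => [i ui|h]; first by exists i.
by case/eqP: un; apply/ffunP=> i; rewrite ffunE; move/negbFE/eqP: (h i).
Qed.

Lemma dim_Ssc c (W : {vspace V}) : c != 0 -> \dim (Ssc c @: W) = \dim W.
Proof.
move=> c0; apply: limg_dim_eq; apply/eqP; rewrite -subv0; apply/subvP=> v.
rewrite memv_cap memv_ker SscE memv0 => /andP[_ /eqP h]; apply/eqP/ffunP=> i.
move/ffunP: h => /(_ i); rewrite !ffunE => /eqP; rewrite mulf_eq0 (negbTE c0) /=.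
by move/eqP.
Qed.

Lemma dim_Lz u (W : {vspace L}) : u != 0 -> \dim (Lz u @: W) = \dim W.
Proof.
move=> /ffun_nz [i ui]; apply: limg_dim_eq; apply/eqP; rewrite -subv0; apply/subvP=> c.
rewrite memv_cap memv_ker LzE memv0 => /andP[_ /eqP h].
move/ffunP: h => /(_ i); rewrite !ffunE => /eqP; rewrite mulf_eq0 (negbTE ui) orbF.
by [].
Qed.

Lemma dotv_lz a z c : dotv a (lzf z c) = c * dotv a z.
Proof. by rewrite /dotv mulr_sumr; apply: eq_bigr => i _; rewrite ffunE mulrCA. Qed.

Lemma dotv_scf a z c : dotv a (scf c z) = c * dotv a z.
Proof. by rewrite /dotv mulr_sumr; apply: eq_bigr => i _; rewrite ffunE mulrCA. Qed.

Lemma lzf1 z : lzf z 1 = z.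
Proof. by apply/ffunP=> i; rewrite ffunE mul1r. Qed.

Lemma lzf_scf z c : lzf z c = scf c z.
Proof. by []. Qed.

Lemma dotv_comb (p q : V) (al : L) (r s : V) :
  dotv ([ffun i => al * p i + q i] : V) ([ffun i => r i - al * s i] : V) =
  al * (dotv p r - al * dotv p s) + (dotv q r - al * dotv q s).
Proof.
rewrite /dotv !mulrBr !mulr_sumr -!sumrB -big_split /=; apply: eq_bigr => i _.
rewrite !ffunE; ring.
Qed.

End S.
Lemma arA (a b c : nat) : (a + b = c + 3 -> 3 <= b -> 4 <= a -> 4 <= c)%N.
Proof. lia. Qed.
Lemma arB (a b c : nat) : (a + b = c + 3 -> 2 <= b -> 5 <= a -> 4 <= c)%N.
Proof. lia. Qed.
Lemma arC (a b : nat) : (a + b = 7 -> 4 <= a -> b <= 3)%N.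
Proof. lia. Qed.
Lemma arD (q d : nat) : (0 < q -> d <= 3 -> q ^ 3 <= (q ^ d).-1 -> False)%N.
Proof.
move=> q0 d3 h; have h1 := leq_pexp2l q0 d3; have h2 : (0 < q ^ d)%N by rewrite expn_gt0 q0.
lia.
Qed.
Lemma main_aux (F : finFieldType) (L : fieldExtType F)
    (HL : \dim (fullv : {vspace L}) = 3)
    (U : {vspace {ffun 'I_4 -> L}}) :
  ~ (is_system 7 U /\ is_cutting U).
Proof.
move=> [[dimU _] cut].
have dV : \dim (fullv : {vspace {ffun 'I_4 -> L}}) = 12%N by rewrite dimV HL.
have [lam _ lamN1] : exists2 lam : L, lam \in fullv & lam \notin <[1]>%VS.
  apply/subvPn; apply: contraTN isT => /dimvS; rewrite HL dim_vline oner_eq0.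
  by [].
have lam0 : lam != 0 by apply: contraNneq lamN1 => ->; rewrite mem0v.
have [u uU [lamuU u0]] : exists2 u, u \in U & (scf lam u \in U) /\ u != 0.
  have : (0 < \dim (U :&: (Ssc lam @: U)))%N.
    have := dimv_sum_cap U (Ssc lam @: U); rewrite dim_Ssc // dimU.
    have := dimvS (subvf (U + Ssc lam @: U)); rewrite dV; lia.
  rewrite lt0n dimv_eq0 -vpick0 => nz.
  have := memv_pick (U :&: (Ssc lam @: U)); rewrite memv_cap => /andP[wU /memv_imgP[u uU ew]].
  exists u => //; rewrite -SscE -ew; split => //.
  by apply: contraNneq nz => ew0; rewrite ew ew0 linear0.
set P := (Lz u @: fullv)%VS.
set E := (<[1]> + <[lam]>)%VS : {vspace L}.
have dimP : \dim P = 3%N by rewrite dim_Lz.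
have dimE : (2 <= \dim E)%N.
  have /ltn_leqif := dimv_leqif_eq (addvSl <[1]> <[lam]>).
  rewrite dim_vline oner_eq0 /= => ->.
  by apply: contraNN lamN1 => /eqP ->; rewrite memvE addvSr.
have LzE_sub z : (Lz z @: E = <[z]> + <[scf lam z]>)%VS.
  by rewrite limgD !limg_line !LzE lzf1.
have UP2 : (2 <= \dim (U :&: P))%N.
  apply: leq_trans dimE _; rewrite -(dim_Lz E u0); apply: dimvS.
  rewrite subv_cap; apply/andP; split; last exact: limgS (subvf _).
  by rewrite LzE_sub subv_add -!memvE uU lamuU.
have [x [xU xP xcase]] : exists x, [/\ x \in U, x \notin P &
    ((P <= U)%VS \/ scf lam x \in (U + P)%VS)].
  case: (boolP (P <= U)%VS) => PU.
    have [x xU xP] : exists2 x, x \in U & x \notin P.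
      by apply/subvPn; apply/negP => /dimvS; rewrite dimU dimP.
    by exists x; split => //; left.
  set Y := (Ssc lam^-1 @: (U + P))%VS.
  have dimUP : (\dim (U + P) + \dim (U :&: P) = 10)%N by rewrite dimv_sum_cap dimU dimP.
  have w2 : (\dim (U :&: P) < 3)%N.
    have /ltn_leqif := dimv_leqif_eq (capvSr U P); rewrite dimP => ->.
    by apply/negP => /eqP eUP; case/negP: PU; rewrite -eUP capvSl.
  have dY : \dim Y = \dim (U + P) by rewrite dim_Ssc // invr_neq0.
  have : ~~ (U :&: Y <= P)%VS.
    apply/negP => XP.
    have : (\dim (U :&: Y) <= \dim (U :&: P))%N.
      by apply: dimvS; rewrite subv_cap capvSl XP.
    have := dimv_sum_cap U Y; have := dimvS (subvf (U + Y)); rewrite dV dY dimU.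
    lia.
  case/subvPn => x; rewrite memv_cap => /andP[xU /memv_imgP[z zUP ex]] xP.
  exists x; split => //; right; rewrite ex SscE.
  suff -> : scf lam (scf lam^-1 z) = z by [].
  by apply/ffunP => i; rewrite !ffunE mulrA mulfV // mul1r.
pose M : 'M[L]_(2,4) := \matrix_(i, j) (if (i : nat) == 0%N then u j else x j).
have [G [E0 [MG EG]]] := dual2 M.
have MGE (i j : 'I_2) : \sum_k M i k * G k j = 0.
  by have := congr1 (fun A : 'M[L]_(2,2) => A i j) MG; rewrite !mxE.
have EGE (i j : 'I_2) : \sum_k E0 i k * G k j = (i == j)%:R.
  by have := congr1 (fun A : 'M[L]_(2,2) => A i j) EG; rewrite !mxE.
pose f : {ffun 'I_4 -> L} := [ffun k => G k ord0].
pose g : {ffun 'I_4 -> L} := [ffun k => G k ord_max].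
pose e : {ffun 'I_4 -> L} := [ffun k => E0 ord0 k].
pose e' : {ffun 'I_4 -> L} := [ffun k => E0 ord_max k].
have fu : dotv f u = 0.
  by rewrite /dotv -[RHS](MGE ord0 ord0) /M; apply: eq_bigr => k _; rewrite !mxE !ffunE mulrC.
have gu : dotv g u = 0.
  by rewrite /dotv -[RHS](MGE ord0 ord_max) /M; apply: eq_bigr => k _; rewrite !mxE !ffunE mulrC.
have fx : dotv f x = 0.
  by rewrite /dotv -[RHS](MGE ord_max ord0) /M; apply: eq_bigr => k _; rewrite !mxE !ffunE mulrC.
have gx : dotv g x = 0.
  by rewrite /dotv -[RHS](MGE ord_max ord_max) /M; apply: eq_bigr => k _; rewrite !mxE !ffunE mulrC.
have fe : dotv f e = 1.
  by rewrite /dotv -[RHS](EGE ord0 ord0); apply: eq_bigr => k _; rewrite !ffunE mulrC.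
have fe' : dotv f e' = 0.
  by rewrite /dotv -[RHS](EGE ord_max ord0); apply: eq_bigr => k _; rewrite !ffunE mulrC.
have ge : dotv g e = 0.
  by rewrite /dotv -[RHS](EGE ord0 ord_max); apply: eq_bigr => k _; rewrite !ffunE mulrC.
have ge' : dotv g e' = 1.
  by rewrite /dotv -[RHS](EGE ord_max ord_max); apply: eq_bigr => k _; rewrite !ffunE mulrC.
clearbody f g e e'; clear MGE EGE MG EG.
set S := (lker (Dt f) :&: lker (Dt g))%VS.
have memS v : (v \in S) = (dotv f v == 0) && (dotv g v == 0).
  by rewrite memv_cap !memv_ker !DtE.
set K := (U :&: S)%VS.
have PS : (P <= S)%VS.
  by apply/subvP => v /memv_imgP[c _ ->]; rewrite memS LzE !dotv_lz fu gu !mulr0 eqxx.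
have xS : x \in S by rewrite memS fx gx eqxx.
have xK : x \in K by rewrite memv_cap xU xS.
have Pdisj : (P :&: (Lz x @: fullv) = 0)%VS.
  apply/eqP; rewrite -subv0; apply/subvP => z.
  rewrite memv_cap memv0 => /andP[/memv_imgP[a _ ->] /memv_imgP[b _ eab]].
  case: (eqVneq b 0) => [b0|bn0]; first by rewrite eab b0 linear0.
  case/negP: xP; apply/memv_imgP; exists (a / b); first exact: memvf.
  apply/ffunP => i; move/ffunP: eab => /(_ i); rewrite !LzE !ffunE => eab.
  apply: (mulfI bn0); rewrite -eab; field.
  by [].
have UPK : (U :&: P <= K :&: P)%VS.
  by rewrite subv_cap capvSr andbT; exact: capvS (subvv U) PS.
have x0 : x != 0 by apply: contraNneq xP => ->; rewrite mem0v.
have sc := dimv_sum_cap K P; rewrite dimP in sc.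
have KP := dimvS UPK.
have xLx : x \in (Lz x @: fullv)%VS by rewrite -[x in x \in _]lzf1 -LzE memv_img ?memvf.
have d4 : \dim (P + <[x]>) = 4%N.
  rewrite dimv_disjoint_sum ?dimP ?dim_vline ?x0 //.
  apply/eqP; rewrite -subv0 -Pdisj; apply: capvS (subvv P) _.
  by rewrite -memvE.
have dimK : (4 <= \dim K)%N.
  case: xcase => [PU | lxUP].
    have : (4 <= \dim (K + P))%N.
      apply: (@leq_trans (\dim (P + <[x]>))); first by rewrite d4.
      apply: dimvS; rewrite addvC subv_add addvSr /= -memvE.
      by rewrite -[x in x \in _]addr0 memv_add ?mem0v.
    move/capv_idPr: PU => UP; rewrite UP dimP in KP.
    exact: arA sc KP.
  have : (5 <= \dim (K + P))%N.
    apply: (@leq_trans (\dim (P + Lz x @: E))).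
      rewrite dimv_disjoint_sum ?dimP ?dim_Lz //.
      by apply/eqP; rewrite -subv0 -Pdisj; apply: capvS (subvv P) (limgS _ (subvf E)).
    apply: dimvS; rewrite addvC subv_add addvSr andbT LzE_sub subv_add -!memvE.
    rewrite -[x in x \in _]addr0 memv_add ?mem0v //=.
    case/memv_addP: lxUP => y yU [p pP ep].
    have yS : y \in S.
      rewrite (_ : y = scf lam x - p); last by rewrite ep addrK.
      rewrite rpredB //; last exact: (subvP PS).
      by rewrite memS !dotv_scf fx gx !mulr0 eqxx.
    by rewrite ep memv_add // memv_cap yU yS.
  exact: arB sc (leq_trans UP2 KP).
set C := (U :\: K)%VS.
have UCK : (C + U :&: K)%VS = U := addv_diff_cap U K.
have KU : (U :&: K)%VS = K by apply/capv_idPr; exact: capvSl.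
have dimC : (\dim C <= 3)%N.
  have := dimv_cap_compl U K; rewrite KU dimU => h; exact: arC h dimK.
have UKS : (U :&: K <= S)%VS by rewrite KU capvSr.
pose cv (t : {ffun 'I_(\dim C) -> F}) : {ffun 'I_4 -> L} := \sum_i t i *: (vbasis C)`_i.
pose val t := - dotv g (cv t) / dotv f (cv t).
pose h t : {ffun 'I_(\dim (fullv : {vspace L})) -> F} := [ffun i => coord (vbasis (fullv : {vspace L})) i (val t)].
have [s hs] : exists s, forall t, t != 0 -> h t != s.
  case: (pickP (fun s : {ffun 'I_(\dim (fullv : {vspace L})) -> F} => [forall t : {ffun 'I_(\dim C) -> F}, (t != 0) ==> (h t != s)])) => [s /forallP hs|none].
    by exists s => t tn; exact: (implyP (hs t) tn).
  exfalso.
  have allin s : s \in h @: [set~ (0 : {ffun 'I_(\dim C) -> F})].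
    have := none s; move/negbT/forallPn => [t]; rewrite negb_imply negbK => /andP[tn /eqP <-].
    by apply: imset_f; rewrite !inE.
  have := leq_imset_card h [set~ (0 : {ffun 'I_(\dim C) -> F})]; rewrite cardsC1 card_ffun card_ord.
  have := subset_leq_card (subsetT (h @: [set~ (0 : {ffun 'I_(\dim C) -> F})])).
  rewrite (_ : h @: _ = setT); last by apply/setP => z; rewrite inE allin.
  rewrite cardsT card_ffun card_ord HL => h1 h2.
  apply: (arD _ dimC (leq_trans h1 h2)).
  by apply/card_gt0P; exists 0.
pose al : L := \sum_i s i *: (vbasis (fullv : {vspace L}))`_i.
have valN t : t != 0 -> val t != al.
  move=> tn; apply: contra (hs t tn) => /eqP vt; apply/eqP/ffunP => i.
  by rewrite ffunE vt coord_sum_free //; exact: basis_free (vbasisP _).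
have key w : w \in U -> al * dotv f w + dotv g w = 0 -> dotv f w = 0 /\ dotv g w = 0.
  rewrite -UCK => /memv_addP[c cC [k kK ->]].
  have /andP[/eqP fk /eqP gk] : (dotv f k == 0) && (dotv g k == 0).
    by rewrite -memS; exact: (subvP UKS).
  rewrite !linearD /= fk gk !addr0 => h0.
  pose t : {ffun 'I_(\dim C) -> F} := [ffun i => coord (vbasis C) i c].
  have ct : cv t = c.
    by rewrite [RHS](coord_vbasis cC); apply: eq_bigr => i _; rewrite ffunE.
  case: (eqVneq (dotv f c) 0) => [fc0 | fcn].
    by split => //; move: h0; rewrite fc0 mulr0 add0r.
  exfalso.
  have tn : t != 0.
    apply: contraNneq fcn => t0; rewrite -ct t0 /cv big1 ?linear0 // => i _.
    by rewrite ffunE scale0r.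
  have gc : dotv g c = - (al * dotv f c).
    by apply/eqP; rewrite -addr_eq0 addrC h0.
  by case/negP: (valN t tn); rewrite /val ct gc opprK mulfK.
pose a : {ffun 'I_4 -> L} := [ffun i => al * f i + g i].
pose v : {ffun 'I_4 -> L} := [ffun i => e i - al * e' i].
have dl w : dotv a w = al * dotv f w + dotv g w.
  rewrite /dotv mulr_sumr -big_split; apply: eq_bigr => i _.
  by rewrite ffunE mulrDl mulrA.
have dr p : dotv p v = dotv p e - al * dotv p e'.
  rewrite /dotv mulr_sumr -sumrB; apply: eq_bigr => i _.
  by rewrite ffunE mulrBr mulrCA.
have a0 : a != 0.
  apply/eqP => a0; move: (dl e'); rewrite a0 fe' ge' mulr0 add0r /dotv big1.
    by move/eqP; rewrite eq_sym oner_eq0.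
  by move=> i _; rewrite ffunE mul0r.
have vH : v \in Lhyperplane a.
  rewrite inE /=; apply/eqP; rewrite -/(dotv a v) dl !dr fe fe' ge ge'.
  ring.
have [sq [cs [hall [sz ev]]]] := cut a a0 v vH.
have fv : dotv f v = 1 by rewrite dr fe fe' mulr0 subr0.
have : dotv f v = 0.
  rewrite ev; transitivity (\sum_(j < size sq) cs`_j * dotv f sq`_j).
    rewrite /dotv; under eq_bigr do rewrite ffunE mulr_sumr.
    rewrite exchange_big; apply: eq_bigr => j _; rewrite mulr_sumr.
    by apply: eq_bigr => i _; rewrite mulrCA.
  apply: big1 => j _.
  have /andP[jH jU] := allP hall _ (mem_nth 0 (ltn_ord j)).
  have hj : al * dotv f sq`_j + dotv g sq`_j = 0.
    by rewrite -dl; apply/eqP; exact: jH.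
  by rewrite (key _ jU hj).1 mulr0.
by rewrite fv => /eqP; rewrite oner_eq0.
Qed.
End Aux.

(* F = F_q ranges over all finite fields (q = #|F| any prime power),
   L is an extension of F of degree 3, i.e. L = F_{q^3}. *)
Theorem corollary3p12 (F : finFieldType) (L : fieldExtType F)
    (HL : \dim (fullv : {vspace L}) = 3)
    (U : {vspace {ffun 'I_4 -> L}}) :
  ~ (is_system 7 U /\ is_cutting U).
Proof. exact: Aux.main_aux. Qed.
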